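(* Let $n,m\geq 0$ be integers and let $Q(n,m)$ be the quiver with two vertices $1,2$, one arrow $x:1\to 2$, one arrow $y:2\to 1$, $n$ loops at vertex $1$ and $m$ loops at vertex $2$. Let $A=\Bbbk Q(n,m)/(\geq 2)$. Then $$\operatorname{fpd}(A\text{-mod})=\tfrac12\Big(\sqrt{(m-n)^2+4}+m+n\Big).$$
   Context: $\Bbbk$ is an algebraically closed field; $\Bbbk Q$ is the path algebra with $e_i\alpha=\delta_{i,t(\alpha)}\alpha$, $\alpha e_j=\delta_{j,s(\alpha)}\alpha$; $(\geq 2)$ is the ideal generated by paths of length $\geq 2$; $A\text{-mod}$ is the category of finite-dimensional left $A$-modules. For a $\Bbbk$-linear abelian category $\mathcal C$: an object $M$ is a brick if $\mathrm{Hom}(M,M)=\Bbbk$; a finite set $\phi=\{X_1,\dots,X_k\}$ of nonzero objects is a brick set if each $X_i$ is a brick and $\dim\mathrm{Hom}(X_i,X_j)=\delta_{ij}$; its adjacency matrix is $A(\phi)=(\dim\mathrm{Ext}^1_{\mathcal C}(X_i,X_j))_{i,j}$; and $\operatorname{fpd}(\mathcal C)=\sup_{\phi}\rho(A(\phi))$, the supremum over all brick sets of the spectral radius $\rho$. *)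

(* Defs.v *)
From HB Require Import structures.
From mathcomp Require Import all_boot all_order all_algebra all_field.
Set Implicit Arguments. Unset Strict Implicit. Unset Printing Implicit Defensive.
Import Order.TTheory GRing.Theory Num.Theory.
Local Open Scope ring_scope.

(* Finite-dimensional left modules over A = k Q(n,m) / (paths of length >= 2),
   presented (equivalently) as finite-dimensional representations of the
   quiver Q(n,m) in which every composite of two arrows acts as zero.
   Vertex 1 has space F^d1, vertex 2 has space F^d2 (row vectors); an arrow
   a : i -> j acts by right multiplication v |-> v *m M_a.
     rx     : the arrow x : 1 -> 2
     ry     : the arrow y : 2 -> 1
     rl1 i  : the i-th loop at vertex 1 (i < n)
     rl2 j  : the j-th loop at vertex 2 (j < m)
   The composite "a then b" acts as M_a *m M_b. *)
Record rmod (F : fieldType) (n m : nat) := RMod {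
  d1 : nat;
  d2 : nat;
  rx : 'M[F]_(d1, d2);
  ry : 'M[F]_(d2, d1);
  rl1 : 'I_n -> 'M[F]_d1;
  rl2 : 'I_m -> 'M[F]_d2;
  rad2_zero :
    (rx *m ry = 0) /\ (ry *m rx = 0) /\
    (forall j, rx *m rl2 j = 0) /\ (forall j, rl2 j *m ry = 0) /\
    (forall i, ry *m rl1 i = 0) /\ (forall i, rl1 i *m rx = 0) /\
    (forall i i', rl1 i *m rl1 i' = 0) /\
    (forall j j', rl2 j *m rl2 j' = 0)
}.

Definition rmod_nonzero (F : fieldType) n m (X : rmod F n m) : Prop :=
  (0 < d1 X + d2 X)%N.

Section Cochains.
Variables (F : fieldType) (n m : nat) (X Y : rmod F n m).

Definition C0 := ('M[F]_(d1 X, d1 Y) * 'M[F]_(d2 X, d2 Y))%type.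
(* 1-cochains: one map D_a : X_{s(a)} -> Y_{t(a)} per arrow a. *)
Definition C1 :=
  (('M[F]_(d1 X, d2 Y) * 'M[F]_(d2 X, d1 Y)) *
   ({ffun 'I_n -> 'M[F]_(d1 X, d1 Y)} * {ffun 'I_m -> 'M[F]_(d2 X, d2 Y)}))%type.
(* 2-cochains: one map per composable pair (a then b) of arrows. *)
Definition C2 :=
  ((('M[F]_(d1 X, d1 Y) * 'M[F]_(d2 X, d2 Y)) *
    ({ffun 'I_m -> 'M[F]_(d1 X, d2 Y)} * {ffun 'I_n -> 'M[F]_(d2 X, d1 Y)})) *
   (({ffun 'I_n -> 'M[F]_(d1 X, d2 Y)} * {ffun 'I_m -> 'M[F]_(d2 X, d1 Y)}) *
    ({ffun ('I_n * 'I_n)%type -> 'M[F]_(d1 X, d1 Y)} *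
     {ffun ('I_m * 'I_m)%type -> 'M[F]_(d2 X, d2 Y)})))%type.

(* delta0 H = (H_{s(a)} M^Y_a - M^X_a H_{t(a)})_a ; its kernel is Hom(X,Y). *)
Definition delta0 (H : C0) : C1 :=
  ((H.1 *m rx Y - rx X *m H.2, H.2 *m ry Y - ry X *m H.1),
   ([ffun i => H.1 *m rl1 Y i - rl1 X i *m H.1],
    [ffun j => H.2 *m rl2 Y j - rl2 X j *m H.2])).

(* delta1 D = (M^X_a D_b + D_a M^Y_b)_{(a,b) composable}: the condition that
   the block matrices [[M^X_a, D_a],[0, M^Y_a]] define a module E (i.e. that
   composites of two arrows vanish on E = X (+) Y), giving an extension
   0 -> Y -> E -> X -> 0. *)
Definition delta1 (D : C1) : C2 :=
  let: ((Dx, Dy), (Dl1, Dl2)) := D in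
  (((rx X *m Dy + Dx *m ry Y, ry X *m Dx + Dy *m rx Y),
    ([ffun j => rx X *m Dl2 j + Dx *m rl2 Y j],
     [ffun i => ry X *m Dl1 i + Dy *m rl1 Y i])),
   (([ffun i => rl1 X i *m Dx + Dl1 i *m rx Y],
     [ffun j => rl2 X j *m Dy + Dl2 j *m ry Y]),
    ([ffun p => rl1 X p.1 *m Dl1 p.2 + Dl1 p.1 *m rl1 Y p.2],
     [ffun q => rl2 X q.1 *m Dl2 q.2 + Dl2 q.1 *m rl2 Y q.2]))).

End Cochains.

Definition dimHom (F : fieldType) n m (X Y : rmod F n m) : nat :=
  \dim (lker (linfun (@delta0 F n m X Y))).

Definition dimExt1 (F : fieldType) n m (X Y : rmod F n m) : nat :=
  (\dim (lker (linfun (@delta1 F n m X Y)))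
   - \dim (limg (linfun (@delta0 F n m X Y))))%N.

Definition is_brick (F : fieldType) n m (X : rmod F n m) : Prop :=
  dimHom X X = 1%N.

Definition brick_set (F : fieldType) n m k (phi : 'I_k -> rmod F n m) : Prop :=
  (forall i, rmod_nonzero (phi i)) /\ (forall i, is_brick (phi i)) /\
  (forall i j, dimHom (phi i) (phi j) = (i == j)%N).

Definition adj_mx (F : fieldType) n m k (phi : 'I_k -> rmod F n m)
  : 'M[algC]_k := \matrix_(i, j) (dimExt1 (phi i) (phi j))%:R.

(* Spectral radius: max |lambda| over the complex eigenvalues (roots of the
   characteristic polynomial); 0 for the empty matrix. *)
Definition spec_radius k (M : 'M[algC]_k) : algC :=
  \big[Num.max/0]_(z <- sval (closed_field_poly_normal (char_poly M))) `|z|.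

Definition fpd_is (F : fieldType) (n m : nat) (v : algC) : Prop :=
  (forall k (phi : 'I_k -> rmod F n m), brick_set phi ->
     spec_radius (adj_mx phi) <= v) /\
  (forall e : algC, 0 < e -> exists k (phi : 'I_k -> rmod F n m),
     brick_set phi /\ v - e < spec_radius (adj_mx phi)).

(* Main.v *)
Require Import Defs.
From HB Require Import structures.
From mathcomp Require Import all_boot all_order all_algebra all_field.
From mathcomp Require Import ring zify.
Set Implicit Arguments. Unset Strict Implicit. Unset Printing Implicit Defensive.
Import Order.TTheory GRing.Theory Num.Theory.
Local Open Scope ring_scope.


Section S.
Variables (F : fieldType) (n m : nat) (X Y : rmod F n m).

Lemma delta0_lin : linear (@delta0 F n m X Y).
Proof.
move=> a [H1 H2] [K1 K2]; rewrite /delta0 /=.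
have L (p q r s : nat) (A : 'M[F]_(p,q)) (B : 'M[F]_(r,s)) (H K : 'M[F]_(p,r)) (H' K' : 'M[F]_(q,s)) :
  (a *: H + K) *m B - A *m (a *: H' + K') = a *: (H *m B - A *m H') + (K *m B - A *m K').
  by rewrite mulmxDl mulmxDr -scalemxAl -scalemxAr scalerBr addrACA opprD.
rewrite !L. apply: injective_projections; [apply: injective_projections|apply: injective_projections] => /=; try done; apply/ffunP => i; rewrite !ffunE /= ?ffunE. all: by rewrite L.





Qed.
HB.instance Definition _ := GRing.isLinear.Build F (C0 X Y) (C1 X Y) _ (@delta0 F n m X Y) delta0_lin.

Lemma delta1_lin : linear (@delta1 F n m X Y).
Proof.
move=> a [[Dx Dy] [Dl1 Dl2]] [[Ex Ey] [El1 El2]]; rewrite /delta1 /=.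
have L (p q r s t : nat) (A : 'M[F]_(p,q)) (B : 'M[F]_(r,s)) (H K : 'M[F]_(p,r)) (H' K' : 'M[F]_(q,s)) (_ : t = t) :
  A *m (a *: H' + K') + (a *: H + K) *m B = a *: (A *m H' + H *m B) + (A *m K' + K *m B).
  by rewrite mulmxDl mulmxDr -scalemxAl -scalemxAr scalerDr addrACA.
have L2 (p q r s : nat) (A : 'M[F]_(p,q)) (B : 'M[F]_(r,s)) (H K : 'M[F]_(p,r)) (H' K' : 'M[F]_(q,s)) :
  A *m (a *: H' + K') + (a *: H + K) *m B = a *: (A *m H' + H *m B) + (A *m K' + K *m B).
  exact: (L _ _ _ _ 0%N).
rewrite !L2.
do 3 (apply: injective_projections => /=); try done.
all: apply/ffunP => i; rewrite !ffunE /= ?ffunE.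
all: by rewrite L2.
Qed.
HB.instance Definition _ := GRing.isLinear.Build F (C1 X Y) (C2 X Y) _ (@delta1 F n m X Y) delta1_lin.

Lemma dimC0 : dim (C0 X Y) = (d1 X * d1 Y + d2 X * d2 Y)%N.
Proof. by []. Qed.
Lemma dimC1 : dim (C1 X Y) = (d1 X * d2 Y + d2 X * d1 Y + (n * (d1 X * d1 Y) + m * (d2 X * d2 Y)))%N.
Proof. rewrite /C1 /dim /=. rewrite /dim /=. rewrite /dim /= !card_ord. by []. Qed.

Definition ssimple (Z : rmod F n m) :=
  [/\ rx Z = 0, ry Z = 0, (forall i, rl1 Z i = 0) & (forall j, rl2 Z j = 0)].

Hypotheses (sX : ssimple X) (sY : ssimple Y).

Lemma delta0_ss (H : C0 X Y) : delta0 H = 0.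
Proof.
rewrite /delta0 /=; case: sX => -> -> l1 l2; case: sY => -> -> k1 k2.
apply: injective_projections; [apply: injective_projections|apply: injective_projections] => /=.
- by rewrite mulmx0 mul0mx subrr.
- by rewrite mulmx0 mul0mx subrr.
- by apply/ffunP => i; rewrite !ffunE /= l1 k1 mulmx0 mul0mx subrr.
- by apply/ffunP => i; rewrite !ffunE /= l2 k2 mulmx0 mul0mx subrr.
Qed.

Lemma delta1_ss (D : C1 X Y) : delta1 D = 0.
Proof.
case: D => [[Dx Dy] [Dl1 Dl2]]; rewrite /delta1 /=; case: sX => -> -> l1 l2; case: sY => -> -> k1 k2.
do 3 (apply: injective_projections => /=); rewrite ?mulmx0 ?mul0mx ?addr0 //.
all: apply/ffunP => i; rewrite !ffunE /= ?l1 ?l2 ?k1 ?k2 ?mulmx0 ?mul0mx ?addr0 //.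
Qed.

Lemma lker_ss0 : lker (linfun (@delta0 F n m X Y)) = fullv.
Proof. by apply/vspaceP => H; rewrite memvf memv_ker lfunE /= delta0_ss eqxx. Qed.
Lemma lker_ss1 : lker (linfun (@delta1 F n m X Y)) = fullv.
Proof. by apply/vspaceP => H; rewrite memvf memv_ker lfunE /= delta1_ss eqxx. Qed.

Lemma dimHom_ss : dimHom X Y = (d1 X * d1 Y + d2 X * d2 Y)%N.
Proof. by rewrite /dimHom lker_ss0 dimvf dimC0. Qed.

Lemma dimExt1_ss : dimExt1 X Y =
  (d1 X * d2 Y + d2 X * d1 Y + (n * (d1 X * d1 Y) + m * (d2 X * d2 Y)))%N.
Proof.
rewrite /dimExt1 lker_ss1 dimvf dimC1.
have /eqP -> : limg (linfun (@delta0 F n m X Y)) == 0%VS by rewrite -lkerE lker_ss0.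
by rewrite dimv0 subn0.
Qed.
End S.

Section Brick.
Variables (F : fieldType) (n m : nat).

Lemma lker_mem (X Y : rmod F n m) (H : C0 X Y) :
  (H \in lker (linfun (@delta0 F n m X Y))) = (delta0 H == 0).
Proof. by rewrite memv_ker lfunE. Qed.

Lemma dimHom_nz (X Y : rmod F n m) (H : C0 X Y) : delta0 H = 0 -> H != 0 -> dimHom X Y != 0%N.
Proof.
move=> dH Hn; rewrite /dimHom dimv_eq0; apply/negP => /eqP E.
have : H \in lker (linfun (@delta0 F n m X Y)) by rewrite lker_mem dH.
by rewrite E memv0 (negbTE Hn).
Qed.

Lemma scalar1_neq0 p : (0 < p)%N -> (1%:M : 'M[F]_p) != 0.
Proof.
move=> Hp; apply/negP => /eqP/matrixP/(_ (Ordinal Hp) (Ordinal Hp)).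
by rewrite !mxE eqxx => /eqP; rewrite oner_eq0.
Qed.

Lemma pair_neq0l (U V : nmodType) (a : U) (b : V) : a != 0 -> (a, b) != 0.
Proof. by apply: contra => /eqP h; rewrite -[a]/((a, b).1) h. Qed.
Lemma pair_neq0r (U V : nmodType) (a : U) (b : V) : b != 0 -> (a, b) != 0.
Proof. by apply: contra => /eqP h; rewrite -[b]/((a, b).2) h. Qed.

Variable X : rmod F n m.
Definition id0 : C0 X X := (1%:M, 1%:M).

Lemma delta0_id : delta0 id0 = 0.
Proof.
rewrite /delta0 /=.
apply: injective_projections; [apply: injective_projections|apply: injective_projections] => /=.
- by rewrite mul1mx mulmx1 subrr.
- by rewrite mul1mx mulmx1 subrr.
- by apply/ffunP => i; rewrite !ffunE /= mul1mx mulmx1 subrr.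
- by apply/ffunP => i; rewrite !ffunE /= mul1mx mulmx1 subrr.
Qed.

Lemma brick_endo : is_brick X -> forall H : C0 X X, delta0 H = 0 -> exists c : F, H = c *: id0.
Proof.
move=> bX H dH.
have id0k : id0 \in lker (linfun (@delta0 F n m X X)) by rewrite lker_mem delta0_id.
have id0n : id0 != 0.
  case: (posnP (d1 X)) => h1; last exact: pair_neq0l (scalar1_neq0 h1).
  case: (posnP (d2 X)) => h2; last exact: pair_neq0r (scalar1_neq0 h2).
  move: bX; rewrite /is_brick /dimHom => E.
  have := dimvS (subvf (lker (linfun (@delta0 F n m X X)))).
  by rewrite E dimvf dimC0 => H0; exfalso; move: H0; rewrite h1 h2.
have E : lker (linfun (@delta0 F n m X X)) = <[id0]>%VS.
  apply/eqP; rewrite eq_sym eqEdim -memvE id0k /=.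
  by move: bX; rewrite /is_brick /dimHom => ->; rewrite dim_vline id0n.
have : H \in lker (linfun (@delta0 F n m X X)) by rewrite lker_mem dH.
by rewrite E => /vlineP.
Qed.
End Brick.

Section Class.
Variables (F : fieldType) (n m : nat).

Lemma mx_rows0 p q (A : 'M[F]_(p,q)) : p = 0%N -> A = 0.
Proof. by move=> h; apply/matrixP => a b; have := ltn_ord a; rewrite {2}h. Qed.
Lemma mx_cols0 p q (A : 'M[F]_(p,q)) : q = 0%N -> A = 0.
Proof. by move=> h; apply/matrixP => a b; have := ltn_ord b; rewrite {2}h. Qed.

Lemma mul_delta_r p q r (A : 'M[F]_(p,q)) (j : 'I_q) (i : 'I_r) a b :
  (A *m delta_mx j i) a b = A a j * (b == i)%:R.
Proof.
rewrite mxE (bigD1 j) //= big1 ?addr0 => [|k kj]; rewrite !mxE ?eqxx //.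
by rewrite (negbTE kj) mulr0.
Qed.
Lemma mul_delta_l p q r (A : 'M[F]_(q,r)) (j : 'I_p) (i : 'I_q) a b :
  (delta_mx j i *m A) a b = (a == j)%:R * A i b.
Proof.
rewrite mxE (bigD1 i) //= big1 ?addr0 => [|k ki]; rewrite !mxE ?eqxx ?andbT //.
by rewrite (negbTE ki) andbF mul0r.
Qed.

Lemma all_eq1 p (i : 'I_p) : (forall b : 'I_p, b = i) -> p = 1%N.
Proof.
move=> H; have := ltn_ord i; case: p i H => [|[|p]] i H //= _.
have := H (Ordinal (isT : 0 < p.+2)%N); have := H (Ordinal (isT : 1 < p.+2)%N).
by move=> <- /(congr1 val).
Qed.

Lemma ord_all1 p (i : 'I_p) : p = 1%N -> forall b : 'I_p, b = i.
Proof.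
move=> h b; apply: val_inj.
have hb : (val b < 1)%N by rewrite -h ltn_ord.
have hi : (val i < 1)%N by rewrite -h ltn_ord.
by move: hb hi; case: (val b) => //; case: (val i).
Qed.

Lemma mul_single p q r (k : 'I_q) : (forall k' : 'I_q, k' = k) ->
  forall (A : 'M[F]_(p,q)) (B : 'M[F]_(q,r)) a b, (A *m B) a b = A a k * B k b.
Proof.
move=> Hk A B a b; rewrite mxE (bigD1 k) //= big1 ?addr0 // => k' nk.
by rewrite (Hk k') eqxx in nk.
Qed.

Definition loops0 (X : rmod F n m) := (forall i, rl1 X i = 0) /\ (forall j, rl2 X j = 0).
Definition isT1 (X : rmod F n m) := ssimple X /\ d1 X = 1%N /\ d2 X = 0%N.
Definition isT2 (X : rmod F n m) := ssimple X /\ d1 X = 0%N /\ d2 X = 1%N.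
Definition isT3 (X : rmod F n m) := [/\ d1 X = 1%N, d2 X = 1%N, rx X != 0, ry X = 0 & loops0 X].
Definition isT4 (X : rmod F n m) := [/\ d1 X = 1%N, d2 X = 1%N, rx X = 0, ry X != 0 & loops0 X].

Variable X : rmod F n m.
Hypothesis bX : is_brick X.

Lemma loops1_0 i : rl1 X i = 0.
Proof.
have [xy [yx [xl2 [l2y [yl1 [l1x [l1l1 l2l2]]]]]]] := rad2_zero X.
have dH : delta0 ((rl1 X i, 0) : C0 X X) = 0.
  rewrite /delta0 /=.
  apply: injective_projections; [apply: injective_projections|apply: injective_projections] => /=.
  - by rewrite l1x mulmx0 subrr.
  - by rewrite yl1 mul0mx subrr.
  - by apply/ffunP => k; rewrite !ffunE /= !l1l1 subrr.
  - by apply/ffunP => k; rewrite !ffunE /= mulmx0 mul0mx subrr.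
have [c Hc] := brick_endo bX dH.
have E : rl1 X i = c *: 1%:M by move: (congr1 fst Hc).
case: (posnP (d1 X)) => h; first exact: mx_rows0.
have := l1l1 i i; rewrite E -scalemxAl mul1mx scalerA => /eqP.
rewrite scaler_eq0 (negbTE (@scalar1_neq0 F _ h)) orbF mulf_eq0 orbb => /eqP c0.
by rewrite c0 scale0r.
Qed.

Lemma loops2_0 j : rl2 X j = 0.
Proof.
have [xy [yx [xl2 [l2y [yl1 [l1x [l1l1 l2l2]]]]]]] := rad2_zero X.
have dH : delta0 ((0, rl2 X j) : C0 X X) = 0.
  rewrite /delta0 /=.
  apply: injective_projections; [apply: injective_projections|apply: injective_projections] => /=.
  - by rewrite xl2 mul0mx subrr.
  - by rewrite l2y mulmx0 subrr.
  - by apply/ffunP => k; rewrite !ffunE /= mulmx0 mul0mx subrr.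
  - by apply/ffunP => k; rewrite !ffunE /= !l2l2 subrr.
have [c Hc] := brick_endo bX dH.
have E : rl2 X j = c *: 1%:M by move: (congr1 snd Hc).
case: (posnP (d2 X)) => h; first exact: mx_rows0.
have := l2l2 j j; rewrite E -scalemxAl mul1mx scalerA => /eqP.
rewrite scaler_eq0 (negbTE (@scalar1_neq0 F _ h)) orbF mulf_eq0 orbb => /eqP c0.
by rewrite c0 scale0r.
Qed.

Lemma scal1E p (c : F) (a b : 'I_p) : (c *: (1%:M : 'M[F]_p)) a b = c * (a == b)%:R.
Proof. by rewrite !mxE. Qed.

Lemma sq1 (a b : nat) : (a * a + b * b = 1)%N -> (a = 1 /\ b = 0)%N \/ (a = 0 /\ b = 1)%N.
Proof. move=> h; nia. Qed.

Lemma brick_class : [\/ isT1 X, isT2 X, isT3 X | isT4 X].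
Proof.
have L0 : loops0 X := conj loops1_0 loops2_0.
have [xy [yx _]] := rad2_zero X.
case: (eqVneq (rx X) 0) => hx.
  case: (eqVneq (ry X) 0) => hy.
    have sX : ssimple X by split => //; [exact: loops1_0 | exact: loops2_0].
    have := bX; rewrite /is_brick (dimHom_ss sX sX) => /sq1 [[h1 h2]|[h1 h2]].
    - by constructor 1.
    - by constructor 2.
  have := hy; move/matrix0Pn => [i [j hij]].
  pose N : 'M[F]_(d1 X, d2 X) := delta_mx j i.
  have dH : delta0 ((N *m ry X, ry X *m N) : C0 X X) = 0.
    rewrite /delta0 /=; case: L0 => l1 l2.
    apply: injective_projections; [apply: injective_projections|apply: injective_projections] => /=.
    - by rewrite -mulmxA yx mulmx0 mulmxA xy mul0mx subrr.
    - by rewrite mulmxA subrr.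
    - by apply/ffunP => k; rewrite !ffunE /= l1 mulmx0 mul0mx subrr.
    - by apply/ffunP => k; rewrite !ffunE /= l2 mulmx0 mul0mx subrr.
  have [c Hc] := brick_endo bX dH.
  have E1 : N *m ry X = c *: 1%:M by move: (congr1 fst Hc).
  have E2 : ry X *m N = c *: 1%:M by move: (congr1 snd Hc).
  have cE : c = ry X i j.
    by move/matrixP: E1 => /(_ j j); rewrite mul_delta_l scal1E eqxx !mulr1 mul1r.
  have all1 : forall a : 'I_(d1 X), a = j.
    move=> a; apply/eqP; apply/negPn/negP => na.
    move/matrixP: E1 => /(_ a a); rewrite mul_delta_l scal1E eqxx (negbTE na) mul0r mulr1.
    by move/esym/eqP; rewrite cE (negbTE hij).
  have all2 : forall b : 'I_(d2 X), b = i.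
    move=> b; apply/eqP; apply/negPn/negP => nb.
    move/matrixP: E2 => /(_ b b); rewrite mul_delta_r scal1E eqxx (negbTE nb) mulr0 mulr1.
    by move/esym/eqP; rewrite cE (negbTE hij).
  by constructor 4; split => //; apply: all_eq1; [exact: all1 | exact: all2].
have := hx; move/matrix0Pn => [i [j hij]].
pose N : 'M[F]_(d2 X, d1 X) := delta_mx j i.
have dH : delta0 ((rx X *m N, N *m rx X) : C0 X X) = 0.
  rewrite /delta0 /=; case: L0 => l1 l2.
  apply: injective_projections; [apply: injective_projections|apply: injective_projections] => /=.
  - by rewrite mulmxA subrr.
  - by rewrite -mulmxA xy mulmx0 mulmxA yx mul0mx subrr.
  - by apply/ffunP => k; rewrite !ffunE /= l1 mulmx0 mul0mx subrr.
  - by apply/ffunP => k; rewrite !ffunE /= l2 mulmx0 mul0mx subrr.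
have [c Hc] := brick_endo bX dH.
have E1 : rx X *m N = c *: 1%:M by move: (congr1 fst Hc).
have E2 : N *m rx X = c *: 1%:M by move: (congr1 snd Hc).
have cE : c = rx X i j.
  by move/matrixP: E1 => /(_ i i); rewrite mul_delta_r scal1E eqxx !mulr1.
have all1 : forall b : 'I_(d1 X), b = i.
  move=> b; apply/eqP; apply/negPn/negP => nb.
  move/matrixP: E1 => /(_ b b); rewrite mul_delta_r scal1E eqxx (negbTE nb) mulr0 mulr1.
  by move/esym/eqP; rewrite cE (negbTE hij).
have all2 : forall a : 'I_(d2 X), a = j.
  move=> a; apply/eqP; apply/negPn/negP => na.
  move/matrixP: E2 => /(_ a a); rewrite mul_delta_l scal1E eqxx (negbTE na) mul0r mulr1.
  by move/esym/eqP; rewrite cE (negbTE hij).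
have ry0 : ry X = 0.
  apply/matrixP => a b; rewrite [RHS]mxE (all2 a).
  move/matrixP: xy => /(_ i b); rewrite (mul_single all2) mxE => /eqP.
  by rewrite mulf_eq0 (negbTE hij) => /eqP.
by constructor 3; split => //; apply: all_eq1; [exact: all1 | exact: all2].
Qed.
End Class.

Section Pairs.
Variables (F : fieldType) (n m : nat).
Implicit Types X Y : rmod F n m.

Lemma const1_neq0 p q : p = 1%N -> q = 1%N -> forall c : F, c != 0 -> (const_mx c : 'M[F]_(p,q)) != 0.
Proof.
move=> hp hq c c0; apply/negP => /eqP/matrixP.
have ip : (0 < p)%N by rewrite hp. have iq : (0 < q)%N by rewrite hq.
by move=> /(_ (Ordinal ip) (Ordinal iq)); rewrite !mxE => /eqP; rewrite (negbTE c0).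
Qed.

Lemma homA X Y : rx Y = 0 -> ry X = 0 -> loops0 X -> loops0 Y -> d1 X = 1%N -> d1 Y = 1%N ->
  dimHom X Y = 0%N -> False.
Proof.
move=> rY rX [l1 l2] [k1 k2] h1 h2 /eqP; apply/negP.
apply: (@dimHom_nz _ _ _ _ _ ((const_mx 1, 0) : C0 X Y)).
  rewrite /delta0 /=.
  apply: injective_projections; [apply: injective_projections|apply: injective_projections] => /=.
  - by rewrite rY mulmx0 mulmx0 subrr.
  - by rewrite rX mul0mx mul0mx subrr.
  - by apply/ffunP => k; rewrite !ffunE /= l1 k1 mulmx0 mul0mx subrr.
  - by apply/ffunP => k; rewrite !ffunE /= l2 k2 mulmx0 mul0mx subrr.
by apply: pair_neq0l; apply: const1_neq0 => //; exact: oner_neq0.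
Qed.

Lemma homB X Y : rx X = 0 -> ry Y = 0 -> loops0 X -> loops0 Y -> d2 X = 1%N -> d2 Y = 1%N ->
  dimHom X Y = 0%N -> False.
Proof.
move=> rX rY [l1 l2] [k1 k2] h1 h2 /eqP; apply/negP.
apply: (@dimHom_nz _ _ _ _ _ ((0, const_mx 1) : C0 X Y)).
  rewrite /delta0 /=.
  apply: injective_projections; [apply: injective_projections|apply: injective_projections] => /=.
  - by rewrite rX mul0mx mul0mx subrr.
  - by rewrite rY mulmx0 mulmx0 subrr.
  - by apply/ffunP => k; rewrite !ffunE /= l1 k1 mulmx0 mul0mx subrr.
  - by apply/ffunP => k; rewrite !ffunE /= l2 k2 mulmx0 mul0mx subrr.
by apply: pair_neq0r; apply: const1_neq0 => //; exact: oner_neq0.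
Qed.

Lemma const_mul p q r (k : 'I_q) : (forall k' : 'I_q, k' = k) -> forall (a b : F),
  (const_mx a : 'M[F]_(p,q)) *m (const_mx b : 'M[F]_(q,r)) = const_mx (a * b).
Proof. by move=> Hk a b; apply/matrixP => i j; rewrite (mul_single Hk) !mxE. Qed.

Lemma homT3 X Y : isT3 X -> isT3 Y -> dimHom X Y = 0%N -> False.
Proof.
case=> h1 h2 rX ryX [l1 l2]; case=> g1 g2 rY ryY [k1 k2] /eqP; apply/negP.
have := rX; move/matrix0Pn => [i [j hij]]; have := rY; move/matrix0Pn => [i' [j' hij']].
have eX : rx X = const_mx (rx X i j).
  by apply/matrixP => a b; rewrite mxE (ord_all1 i h1 a) (ord_all1 j h2 b).
have eY : rx Y = const_mx (rx Y i' j').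
  by apply/matrixP => a b; rewrite mxE (ord_all1 i' g1 a) (ord_all1 j' g2 b).
apply: (@dimHom_nz _ _ _ _ _ ((const_mx (rx X i j), const_mx (rx Y i' j')) : C0 X Y)).
  rewrite /delta0 /=.
  apply: injective_projections; [apply: injective_projections|apply: injective_projections] => /=.
  - rewrite {1}eY {2}eX (@const_mul _ _ _ _ (ord_all1 i' g1)) (@const_mul _ _ _ _ (ord_all1 j h2)).
    by rewrite mulrC subrr.
  - by rewrite ryX ryY mulmx0 mul0mx subrr.
  - by apply/ffunP => k; rewrite !ffunE /= l1 k1 mulmx0 mul0mx subrr.
  - by apply/ffunP => k; rewrite !ffunE /= l2 k2 mulmx0 mul0mx subrr.
by apply: pair_neq0l; apply: const1_neq0.
Qed.

Lemma homT4 X Y : isT4 X -> isT4 Y -> dimHom X Y = 0%N -> False.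
Proof.
case=> h1 h2 rxX rX [l1 l2]; case=> g1 g2 rxY rY [k1 k2] /eqP; apply/negP.
have := rX; move/matrix0Pn => [i [j hij]]; have := rY; move/matrix0Pn => [i' [j' hij']].
have eX : ry X = const_mx (ry X i j).
  by apply/matrixP => a b; rewrite mxE (ord_all1 i h2 a) (ord_all1 j h1 b).
have eY : ry Y = const_mx (ry Y i' j').
  by apply/matrixP => a b; rewrite mxE (ord_all1 i' g2 a) (ord_all1 j' g1 b).
apply: (@dimHom_nz _ _ _ _ _ ((const_mx (ry Y i' j'), const_mx (ry X i j)) : C0 X Y)).
  rewrite /delta0 /=.
  apply: injective_projections; [apply: injective_projections|apply: injective_projections] => /=.
  - by rewrite rxX rxY mulmx0 mul0mx subrr.
  - rewrite {1}eY {2}eX (@const_mul _ _ _ _ (ord_all1 i' g2)) (@const_mul _ _ _ _ (ord_all1 j h1)).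
    by rewrite mulrC subrr.
  - by apply/ffunP => k; rewrite !ffunE /= l1 k1 mulmx0 mul0mx subrr.
  - by apply/ffunP => k; rewrite !ffunE /= l2 k2 mulmx0 mul0mx subrr.
by apply: pair_neq0r; apply: const1_neq0.
Qed.

End Pairs.

Section PairOk.
Variables (F : fieldType) (n m : nat).
Implicit Types X Y : rmod F n m.

Lemma T1P X : isT1 X -> [/\ rx X = 0, ry X = 0, loops0 X, d1 X = 1%N & d2 X = 0%N].
Proof. by case=> [[? ? ? ?] [? ?]]. Qed.
Lemma T2P X : isT2 X -> [/\ rx X = 0, ry X = 0, loops0 X, d1 X = 0%N & d2 X = 1%N].
Proof. by case=> [[? ? ? ?] [? ?]]. Qed.

Lemma pair_ok X Y : is_brick X -> is_brick Y -> dimHom X Y = 0%N -> dimHom Y X = 0%N ->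
  (isT1 X /\ isT2 Y) \/ (isT2 X /\ isT1 Y).
Proof.
move=> bX bY hXY hYX.
case: (brick_class bX) => tX; case: (brick_class bY) => tY;
  try (by left; split); try (by right; split); exfalso.
all: try (have [? ? ? ? ?] := T1P tX); try (have [? ? ? ? ?] := T2P tX);
     try (have [? ? ? ? ?] := T1P tY); try (have [? ? ? ? ?] := T2P tY);
     try (have [? ? ? ? ?] := tX); try (have [? ? ? ? ?] := tY).
all: first [ by apply: homA hXY | by apply: homA hYX | by apply: homB hXY
           | by apply: homB hYX | by apply: homT3 hXY | by apply: homT4 hXY ].
Qed.
End PairOk.

Section ExtT34.
Variables (F : fieldType) (n m : nat).
Implicit Types X Y : rmod F n m.

Lemma cancel_l p q r (A : 'M[F]_(p,q)) (B : 'M[F]_(q,r)) i0 k :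
  (forall k', k' = k) -> A i0 k != 0 -> A *m B = 0 -> B = 0.
Proof.
move=> Hk nz E; apply/matrixP => a b; rewrite (Hk a) mxE.
move/matrixP: E => /(_ i0 b); rewrite (mul_single Hk) mxE => /eqP.
by rewrite mulf_eq0 (negbTE nz) => /eqP.
Qed.

Lemma cancel_r p q r (A : 'M[F]_(p,q)) (B : 'M[F]_(q,r)) k b0 :
  (forall k', k' = k) -> B k b0 != 0 -> A *m B = 0 -> A = 0.
Proof.
move=> Hk nz E; apply/matrixP => a b; rewrite (Hk b) mxE.
move/matrixP: E => /(_ a b0); rewrite (mul_single Hk) mxE => /eqP.
by rewrite mulf_eq0 (negbTE nz) orbF => /eqP.
Qed.

Lemma dimExt1_le_ker X Y : (dimExt1 X Y <= \dim (lker (linfun (@delta1 F n m X Y))))%N.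
Proof. exact: leq_subr. Qed.

Lemma lker1_mem X Y (D : C1 X Y) :
  (D \in lker (linfun (@delta1 F n m X Y))) = (delta1 D == 0).
Proof. by rewrite memv_ker lfunE. Qed.

Lemma extT3 X : isT3 X -> (dimExt1 X X <= 1)%N.
Proof.
case=> h1 h2 rX ryX [l1 l2].
have := rX; move/matrix0Pn => [i0 [j0 hij]].
have a1 := ord_all1 i0 h1; have a2 := ord_all1 j0 h2.
pose D0 : C1 X X := ((const_mx 1, 0), (0, 0)).
apply: leq_trans (dimExt1_le_ker _ _) _.
have S : (lker (linfun (@delta1 F n m X X)) <= <[D0]>)%VS.
  apply/subvP => [[[Dx Dy] [Dl1 Dl2]]]; rewrite lker1_mem => /eqP E.
  move: (congr1 (fun z : C2 X X => z.1.1.1) E) => /= e1.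
  move: (congr1 (fun z : C2 X X => z.1.2.1) E) => /= e2.
  move: (congr1 (fun z : C2 X X => z.2.1.1) E) => /= e3.
  rewrite ryX mulmx0 addr0 in e1.
  have Dy0 := cancel_l a2 hij e1.
  have Dl20 : Dl2 = 0.
    apply/ffunP => j; move/ffunP: e2 => /(_ j); rewrite !ffunE l2 mulmx0 addr0.
    exact: cancel_l a2 hij.
  have Dl10 : Dl1 = 0.
    apply/ffunP => j; move/ffunP: e3 => /(_ j); rewrite !ffunE l1 mul0mx add0r.
    exact: cancel_r a1 hij.
  apply/vlineP; exists (Dx i0 j0).
  rewrite Dy0 Dl10 Dl20.
  apply: injective_projections; [apply: injective_projections|apply: injective_projections] => /=.
  - by apply/matrixP => a b; rewrite !mxE (a1 a) (a2 b) mulr1.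
  - by apply/matrixP => a b; rewrite !mxE mulr0.
  - by apply/ffunP => j; rewrite !ffunE; apply/matrixP => a b; rewrite !mxE mulr0.
  - by apply/ffunP => j; rewrite !ffunE; apply/matrixP => a b; rewrite !mxE mulr0.
apply: leq_trans (dimvS S) _; rewrite dim_vline; exact: leq_b1.
Qed.

Lemma extT4 X : isT4 X -> (dimExt1 X X <= 1)%N.
Proof.
case=> h1 h2 rxX rX [l1 l2].
have := rX; move/matrix0Pn => [i0 [j0 hij]].
have a1 := ord_all1 j0 h1; have a2 := ord_all1 i0 h2.
pose D0 : C1 X X := ((0, const_mx 1), (0, 0)).
apply: leq_trans (dimExt1_le_ker _ _) _.
have S : (lker (linfun (@delta1 F n m X X)) <= <[D0]>)%VS.
  apply/subvP => [[[Dx Dy] [Dl1 Dl2]]]; rewrite lker1_mem => /eqP E.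
  move: (congr1 (fun z : C2 X X => z.1.1.2) E) => /= e1.
  move: (congr1 (fun z : C2 X X => z.1.2.2) E) => /= e2.
  move: (congr1 (fun z : C2 X X => z.2.1.2) E) => /= e3.
  rewrite rxX mulmx0 addr0 in e1.
  have Dx0 := cancel_l a1 hij e1.
  have Dl10 : Dl1 = 0.
    apply/ffunP => j; move/ffunP: e2 => /(_ j); rewrite !ffunE l1 mulmx0 addr0.
    exact: cancel_l a1 hij.
  have Dl20 : Dl2 = 0.
    apply/ffunP => j; move/ffunP: e3 => /(_ j); rewrite !ffunE l2 mul0mx add0r.
    exact: cancel_r a2 hij.
  apply/vlineP; exists (Dy i0 j0).
  rewrite Dx0 Dl10 Dl20.
  apply: injective_projections; [apply: injective_projections|apply: injective_projections] => /=.
  - by rewrite scaler0.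
  - by apply/matrixP => a b; rewrite !mxE (a2 a) (a1 b) mulr1.
  - by apply/ffunP => j; rewrite !ffunE; apply/matrixP => a b; rewrite !mxE mulr0.
  - by apply/ffunP => j; rewrite !ffunE; apply/matrixP => a b; rewrite !mxE mulr0.
apply: leq_trans (dimvS S) _; rewrite dim_vline; exact: leq_b1.
Qed.
End ExtT34.



Lemma max_leP (x y v : algC) : x <= v -> y <= v -> Num.max x y <= v.
Proof. by rewrite /Num.max /Order.max; case: ifP. Qed.

Lemma max_geP (x y : algC) : x \is Num.real -> y \is Num.real ->
  x <= Num.max x y /\ y <= Num.max x y.
Proof.
move=> rx ry; rewrite /Num.max /Order.max; case: ifP => H; split => //.
- exact: ltW.
- by rewrite real_leNgt // H.
Qed.

Lemma spec_root k (M : 'M[algC]_k) z :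
  (z \in sval (closed_field_poly_normal (char_poly M))) = root (char_poly M) z.
Proof.
case: closed_field_poly_normal => s /= E.
by rewrite [in RHS]E (monicP (char_poly_monic M)) scale1r root_prod_XsubC.
Qed.

Lemma sr_le k (M : 'M[algC]_k) (v : algC) : 0 <= v ->
  (forall z, root (char_poly M) z -> `|z| <= v) -> spec_radius M <= v.
Proof.
move=> v0 H; rewrite /spec_radius.
have : forall z, z \in sval (closed_field_poly_normal (char_poly M)) -> `|z| <= v.
  by move=> z; rewrite spec_root; apply: H.
elim: (sval _) => [|a s IH] Hs; first by rewrite big_nil.
rewrite big_cons; apply: max_leP; first by apply: Hs; rewrite inE eqxx.
by apply: IH => z zs; apply: Hs; rewrite inE zs orbT.
Qed.

Lemma sr_ge0 k (M : 'M[algC]_k) : 0 <= spec_radius M.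
Proof.
rewrite /spec_radius; elim: (sval _) => [|a s IH]; first by rewrite big_nil.
rewrite big_cons; have [_ +] := max_geP (normr_real a) (ger0_real IH).
exact: le_trans IH.
Qed.

Lemma sr_ge k (M : 'M[algC]_k) z : root (char_poly M) z -> `|z| <= spec_radius M.
Proof.
rewrite -spec_root /spec_radius; elim: (sval _) => [|a s IH] //.
have r0 : \big[Num.max/0]_(z <- s) `|z| \is Num.real.
  by apply: bigmax_real => // i _; exact: normr_real.
rewrite inE big_cons => /orP [/eqP ->|/IH Hz].
  by have [+ _] := max_geP (normr_real a) r0.
by have [_ +] := max_geP (normr_real a) r0; exact: le_trans Hz.
Qed.

Lemma ord2P (j : 'I_2) : j = 0 \/ j = 1.
Proof. by case: j => [[|[|j]] Hj]; [left|right|]; try apply: val_inj. Qed.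

Definition vv (p q : nat) : algC := (sqrtC ((q%:R - p%:R) ^+ 2 + 4) + q%:R + p%:R) / 2.

Section Quad.
Variables p q : nat.
Let s : algC := sqrtC ((q%:R - p%:R) ^+ 2 + 4).
Let d : algC := q%:R - p%:R.
Lemma d_real : d \is Num.real. Proof. by rewrite rpredB ?realn. Qed.
Lemma d2_ge0 : 0 <= d ^+ 2. Proof. by rewrite -real_normK ?d_real // exprn_ge0. Qed.
Lemma arg_ge0 : 0 <= d ^+ 2 + 4. Proof. by rewrite addr_ge0 ?d2_ge0 // ler0n. Qed.
Lemma s_ge0 : 0 <= s. Proof. by rewrite sqrtC_ge0 arg_ge0. Qed.
Lemma s_sq : s ^+ 2 = d ^+ 2 + 4. Proof. by rewrite sqrtCK. Qed.
Lemma s_real : s \is Num.real. Proof. exact: ger0_real s_ge0. Qed.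
Lemma absd_le : `|d| <= s.
Proof.
rewrite -(sqrCK (normr_ge0 d)) /s ler_sqrtC ?qualifE /= ?arg_ge0 ?exprn_ge0 //.
by rewrite real_normK ?d_real // lerDl ler0n.
Qed.
Lemma two_le : 2 <= s.
Proof.
have h2 : (0 : algC) <= 2 by rewrite ler0n.
rewrite -(sqrCK h2) /s ler_sqrtC ?qualifE /= ?arg_ge0 ?exprn_ge0 //.
have -> : (2:algC) ^+ 2 = 4 by rewrite -natrX.
by rewrite lerDr d2_ge0.
Qed.
Lemma d_le : d <= s. Proof. exact: le_trans (real_ler_norm d_real) absd_le. Qed.
Lemma md_le : - d <= s.
Proof. by apply: le_trans absd_le; rewrite -normrN real_ler_norm ?rpredN ?d_real. Qed.

Lemma vvE : vv p q = (s + q%:R + p%:R) / 2. Proof. by []. Qed.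
Lemma two_gt0 : (0 : algC) < 2. Proof. by rewrite ltr0n. Qed.
Lemma vv_ge_p : p%:R <= vv p q.
Proof.
rewrite vvE ler_pdivlMr ?two_gt0 // -subr_ge0.
have -> : s + q%:R + p%:R - p%:R * 2 = s - (- d) by rewrite /d; ring.
by rewrite subr_ge0 md_le.
Qed.
Lemma vv_ge_q : q%:R <= vv p q.
Proof.
rewrite vvE ler_pdivlMr ?two_gt0 // -subr_ge0.
have -> : s + q%:R + p%:R - q%:R * 2 = s - d by rewrite /d; ring.
by rewrite subr_ge0 d_le.
Qed.
Lemma vv_ge1 : 1 <= vv p q.
Proof.
rewrite vvE ler_pdivlMr ?two_gt0 // mul1r -addrA.
by apply: le_trans (two_le) _; rewrite lerDl addr_ge0 ?ler0n.
Qed.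
Lemma vv_ge0 : 0 <= vv p q. Proof. exact: le_trans vv_ge1. Qed.

Let M22 (M : 'M[algC]_2) := [/\ M 0 0 = p%:R, M 0 1 = 1, M 1 0 = 1 & M 1 1 = q%:R].

Lemma rowM2 (v : 'rV[algC]_2) (M : 'M[algC]_2) j :
  (v *m M) 0 j = v 0 0 * M 0 j + v 0 1 * M 1 j.
Proof.
rewrite mxE !big_ord_recl big_ord0 addr0.
by rewrite (_ : lift ord0 ord0 = 1 :> 'I_2) //; apply: val_inj.
Qed.

Lemma eig22 (M : 'M[algC]_2) z : M22 M -> root (char_poly M) z ->
  (2 * z - p%:R - q%:R) ^+ 2 = s ^+ 2.
Proof.
case=> e00 e01 e10 e11; rewrite -eigenvalue_root_char => /eigenvalueP [v Hv v0].
have h0 : (v *m M) 0 0 = (z *: v) 0 0 by rewrite Hv.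
have h1 : (v *m M) 0 1 = (z *: v) 0 1 by rewrite Hv.
rewrite rowM2 mxE e00 e10 in h0; rewrite rowM2 mxE e01 e11 in h1.
set a := v 0 0 in h0 h1; set b := v 0 1 in h0 h1.
have key : ((z - p%:R) * (z - q%:R) - 1) * a = 0 /\ ((z - p%:R) * (z - q%:R) - 1) * b = 0.
  split.
  - have -> : ((z - p%:R) * (z - q%:R) - 1) * a = (z - q%:R) * (z * a - (a * p%:R + b * 1)) + (z * b - (a * 1 + b * q%:R)) by ring.
    by rewrite -h0 -h1 !subrr mulr0 addr0.
  - have -> : ((z - p%:R) * (z - q%:R) - 1) * b = (z - p%:R) * (z * b - (a * 1 + b * q%:R)) + (z * a - (a * p%:R + b * 1)) by ring.
    by rewrite -h0 -h1 !subrr mulr0 addr0.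
have E : (z - p%:R) * (z - q%:R) = 1.
  apply/eqP; rewrite -subr_eq0; apply/negPn/negP => ne.
  move: key => [/eqP]; rewrite mulf_eq0 (negbTE ne) /= => /eqP a0.
  move/eqP; rewrite mulf_eq0 (negbTE ne) /= => /eqP b0.
  move/eqP: v0; apply; apply/rowP => j; rewrite mxE.
  by case: (ord2P j) => ->.
rewrite s_sq /d.
have -> : (2 * z - p%:R - q%:R) ^+ 2 = 4 * ((z - p%:R) * (z - q%:R)) + (q%:R - p%:R) ^+ 2 by ring.
by rewrite E mulr1 addrC.
Qed.

Lemma two_neq0 : (2 : algC) != 0. Proof. by rewrite pnatr_eq0. Qed.

Lemma twovv : 2 * vv p q - p%:R - q%:R = s.
Proof. by rewrite vvE; field. Qed.

Lemma sr22_le (M : 'M[algC]_2) : M22 M -> spec_radius M <= vv p q.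
Proof.
move=> HM; apply: sr_le vv_ge0 _ => z rz.
move/eqP: (eig22 HM rz); rewrite eqf_sqr => /orP [/eqP E|/eqP E].
- have -> : z = vv p q.
    have -> : z = ((2 * z - p%:R - q%:R) + p%:R + q%:R) / 2 by field.
    by rewrite E vvE -!addrA [p%:R + _]addrC.
  by rewrite ger0_norm ?vv_ge0.
- have zE : z = (p%:R + q%:R - s) / 2.
    have -> : z = ((2 * z - p%:R - q%:R) + p%:R + q%:R) / 2 by field.
    by rewrite E; congr (_ / _); ring.
  have zr : z \is Num.real by rewrite zE rpredM ?rpredB ?rpredD ?realn ?s_real ?rpredV ?realn.
  rewrite real_ler_norml //; apply/andP; split; rewrite -subr_ge0 ?opprK.
  - have -> : z + vv p q = p%:R + q%:R by rewrite zE vvE; field.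
    by rewrite addr_ge0 ?ler0n.
  - have -> : vv p q - z = s by rewrite zE vvE; field.
    exact: s_ge0.
Qed.

Lemma vv_eq : (vv p q - p%:R) * (vv p q - q%:R) = 1.
Proof.
have h4 : (4 : algC) != 0 by rewrite pnatr_eq0.
apply: (mulfI h4).
have -> : 4 * ((vv p q - p%:R) * (vv p q - q%:R)) = (2 * vv p q - p%:R - q%:R) ^+ 2 - d ^+ 2
  by rewrite /d; ring.
by rewrite twovv s_sq addrC addKr mulr1.
Qed.

Lemma sr22_ge (M : 'M[algC]_2) : M22 M -> vv p q <= spec_radius M.
Proof.
case=> e00 e01 e10 e11.
rewrite -{1}(ger0_norm vv_ge0); apply: sr_ge.
rewrite -eigenvalue_root_char; apply/eigenvalueP.
exists (\row_j (if j == 0 then 1 else vv p q - p%:R)).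
  apply/rowP => j; rewrite rowM2 !mxE /=.
  case: (ord2P j) => ->; rewrite ?e00 ?e10 ?e01 ?e11 /= ?eqxx /=.
  - by ring.
    idtac.
    have := vv_eq; move: (vv p q) => x Hx. 
    apply/eqP; rewrite -subr_eq0.
    have -> : 1 * 1 + (x - p%:R) * q%:R - x * (x - p%:R) = - ((x - p%:R) * (x - q%:R) - 1) by ring.
    by rewrite Hx subrr oppr0.
apply/negP => /eqP /rowP /(_ 0); rewrite !mxE eqxx /=; apply/eqP; exact: oner_neq0.
Qed.
End Quad.

Lemma sr0 (M : 'M[algC]_0) v : 0 <= v -> spec_radius M <= v.
Proof.
move=> v0; apply: sr_le v0 _ => z; rewrite -eigenvalue_root_char => /eigenvalueP [w _ w0].
by move: w0; rewrite thinmx0 eqxx.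
Qed.

Lemma sr11 (M : 'M[algC]_1) v : 0 <= M 0 0 -> M 0 0 <= v -> spec_radius M <= v.
Proof.
move=> h0 h1; apply: sr_le (le_trans h0 h1) _ => z.
rewrite -eigenvalue_root_char => /eigenvalueP [w Hw w0].
have : (w *m M) 0 0 = (z *: w) 0 0 by rewrite Hw.
rewrite mxE big_ord1 mxE => E.
have w00 : w 0 0 != 0.
  apply: contra w0 => /eqP h; apply/eqP/rowP => j; by rewrite (ord1 j) h mxE.
have -> : z = M 0 0 by apply: (mulfI w00); rewrite mulrC -E mulrC.
by rewrite ger0_norm.
Qed.



Lemma vv_sym p q : vv p q = vv q p.
Proof.
by rewrite /vv -sqrrN opprB -!addrA [q%:R + _]addrC.
Qed.

Lemma T12 (F : fieldType) n m (X : rmod F n m) : isT1 X -> isT2 X -> False.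
Proof. by move=> [_ [h _]] [_ [h' _]]; rewrite h in h'. Qed.

Section Main.
Variables (F : fieldType) (n m : nat).

Lemma ext11 (X Y : rmod F n m) : isT1 X -> isT1 Y -> dimExt1 X Y = n.
Proof. by move=> [sX [h1 h2]] [sY [g1 g2]]; rewrite dimExt1_ss // h1 h2 g1 g2; lia. Qed.
Lemma ext12 (X Y : rmod F n m) : isT1 X -> isT2 Y -> dimExt1 X Y = 1%N.
Proof. by move=> [sX [h1 h2]] [sY [g1 g2]]; rewrite dimExt1_ss // h1 h2 g1 g2; lia. Qed.
Lemma ext21 (X Y : rmod F n m) : isT2 X -> isT1 Y -> dimExt1 X Y = 1%N.
Proof. by move=> [sX [h1 h2]] [sY [g1 g2]]; rewrite dimExt1_ss // h1 h2 g1 g2; lia. Qed.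
Lemma ext22 (X Y : rmod F n m) : isT2 X -> isT2 Y -> dimExt1 X Y = m.
Proof. by move=> [sX [h1 h2]] [sY [g1 g2]]; rewrite dimExt1_ss // h1 h2 g1 g2; lia. Qed.

Lemma upper K (phi : 'I_K -> rmod F n m) : brick_set phi ->
  spec_radius (adj_mx phi) <= vv n m.
Proof.
move=> [nz [br hom]].
have hom0 i j : i != j -> dimHom (phi i) (phi j) = 0%N by move=> /negbTE h; rewrite hom h.
have PO i j : i != j -> (isT1 (phi i) /\ isT2 (phi j)) \/ (isT2 (phi i) /\ isT1 (phi j)).
  by move=> h; apply: pair_ok => //; apply: hom0; rewrite // eq_sym.
case: K phi nz br hom hom0 PO => [|[|[|K]]] phi nz br hom hom0 PO.
- exact: sr0 (vv_ge0 n m).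
- apply: sr11; first by rewrite mxE ler0n.
  rewrite mxE; case: (brick_class (br 0)) => t.
  + by rewrite (ext11 t t) vv_ge_p.
  + by rewrite (ext22 t t) vv_ge_q.
  + by apply: le_trans (vv_ge1 n m); rewrite lern1; exact: extT3.
  + by apply: le_trans (vv_ge1 n m); rewrite lern1; exact: extT4.
- have n01 : (0 : 'I_2) != 1 by [].
  case: (PO 0 1 n01) => [[t0 t1]|[t0 t1]].
  + apply: sr22_le; split; rewrite mxE.
    * by rewrite (ext11 t0 t0).
    * by rewrite (ext12 t0 t1).
    * by rewrite (ext21 t1 t0).
    * by rewrite (ext22 t1 t1).
  + rewrite vv_sym; apply: sr22_le; split; rewrite mxE.
    * by rewrite (ext22 t0 t0).
    * by rewrite (ext21 t0 t1).
    * by rewrite (ext12 t1 t0).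
    * by rewrite (ext11 t1 t1).
- exfalso.
  have n01 : (Ordinal (isT : 0 < K.+3)%N) != Ordinal (isT : 1 < K.+3)%N by [].
  have n02 : (Ordinal (isT : 0 < K.+3)%N) != Ordinal (isT : 2 < K.+3)%N by [].
  have n12 : (Ordinal (isT : 1 < K.+3)%N) != Ordinal (isT : 2 < K.+3)%N by [].
  case: (PO _ _ n01) => [[a b]|[a b]]; case: (PO _ _ n02) => [[c d]|[c d]];
    case: (PO _ _ n12) => [[e f]|[e f]];
    first [ exact: T12 a c | exact: T12 c a | exact: T12 b e | exact: T12 e b
          | exact: T12 d f | exact: T12 f d ].
Qed.

End Main.

Section Lower.
Variables (F : fieldType) (n m : nat).

Definition S1m : rmod F n m.
refine (@RMod F n m 1%N 0%N 0 0 (fun _ => 0) (fun _ => 0) _).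
by do !split => *; rewrite ?mulmx0.
Defined.
Definition S2m : rmod F n m.
refine (@RMod F n m 0%N 1%N 0 0 (fun _ => 0) (fun _ => 0) _).
by do !split => *; rewrite ?mulmx0.
Defined.

Lemma S1T : isT1 S1m. Proof. by split. Qed.
Lemma S2T : isT2 S2m. Proof. by split. Qed.

Definition phi2 (i : 'I_2) : rmod F n m := if i == 0 then S1m else S2m.

Lemma phi2_brick : brick_set phi2.
Proof.
have s1 : ssimple S1m by split.
have s2 : ssimple S2m by split.
split; [|split].
- by move=> i; case: (ord2P i) => ->.
- by move=> i; case: (ord2P i) => ->; rewrite /is_brick /phi2 /= dimHom_ss.
- by move=> i j; case: (ord2P i) => ->; case: (ord2P j) => ->; rewrite /phi2 /= dimHom_ss.
Qed.

Lemma phi2_sr : vv n m <= spec_radius (adj_mx phi2).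
Proof.
apply: sr22_ge; split; rewrite mxE /phi2 /=.
- by rewrite (ext11 S1T S1T).
- by rewrite (ext12 S1T S2T).
- by rewrite (ext21 S2T S1T).
- by rewrite (ext22 S2T S2T).
Qed.
End Lower.

Unset Implicit Arguments.
Theorem mainTheorem5 (k : closedFieldType) (n m : nat) :
  fpd_is k n m
    ((sqrtC ((m%:R - n%:R) ^+ 2 + 4) + m%:R + n%:R) / 2).
Proof.
split; first exact: upper.
move=> e e0; exists 2%N, (@phi2 k n m); split; first exact: phi2_brick.
rewrite ltrBlDr; apply: le_lt_trans (phi2_sr k n m) _.
by rewrite ltrDl.
Qed.
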